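(* Let $\nu_1,\lambda_1,\lambda_2\ge0$ and measurable $\beta_1\colon\mathcal X\to(0,\infty)$, $\beta_2\colon\mathcal X\times\mathcal Y_1\to(0,\infty)$ satisfy $\Sigma_2(y_1,y_2)\le1$ and $\Sigma_1(y_1)\le1$ for all $(y_1,y_2)$. Fix an $(M_1,M_2,d_1,d_2,\epsilon_1,\epsilon_2)$ code and define $$F=(1+\nu_1)\log\frac1{\beta_1(X)}-\lambda_1d_1-\lambda_2d_2-\nu_1\log M_1 .$$ Then for all $\gamma_1,\gamma_2>0$ both $$\epsilon_1\ge\mathbb P[F_1\ge\log M_1+\gamma_1]-e^{-\gamma_1}$$ and $$\epsilon_2\ge\mathbb P\big[\{F\ge\log M_2+\nu_1\gamma_1+\gamma_2\}\cup\{F_1\ge\log M_1+\gamma_1\}\big]-e^{-\gamma_1}-e^{-\gamma_2}$$ hold.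
   Context: $X$ has law $P_X$ on $\mathcal X$; $\mathsf d_1\colon\mathcal X\times\mathcal Y_1\to[0,\infty)$, $\mathsf d_2\colon\mathcal X\times\mathcal Y_2\to[0,\infty)$ measurable, all $\sigma$-algebras containing singletons. $\Sigma_2(y_1,y_2)=\mathbb E\big[\exp(-\frac{\lambda_1}{1+\nu_1}\mathsf d_1(X,y_1)-\lambda_2\mathsf d_2(X,y_2))/(\beta_1(X)\beta_2(X|y_1)^{\nu_1/(1+\nu_1)})\big]$, $\Sigma_1(y_1)=\mathbb E\big[\exp(-\frac{\lambda_1}{1+\nu_1}\mathsf d_1(X,y_1))\beta_2(X|y_1)^{1/(1+\nu_1)}/\beta_1(X)\big]$, expectations over $X\sim P_X$. An $(M_1,M_2,d_1,d_2,\epsilon_1,\epsilon_2)$ code: positive integers $M_1\le M_2$, possibly randomized encoders $P_{W_1|X}$ into $\{1,\dots,M_1\}$, $P_{W_2|XW_1}$ into $\{1,\dots,\lfloor M_2/M_1\rfloor\}$, decoders $P_{Y_1|W_1}$, $P_{Y_2|W_1W_2}$, with $\mathcal A_1=\{\mathsf d_1(X,Y_1)\le d_1\}$, $\mathcal A_2=\mathcal A_1\cap\{\mathsf d_2(X,Y_2)\le d_2\}$, $\mathbb P[\mathcal A_1^c]\le\epsilon_1$, $\mathbb P[\mathcal A_2^c]\le\epsilon_2$. $F_1=\log\frac{\beta_2(X|Y_1)^{1/(1+\nu_1)}}{\beta_1(X)}-\frac{\lambda_1}{1+\nu_1}d_1$, where $Y_1$ is the code's first-stage output. Logarithms natural.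 *)

(* Defs.v *)
From HB Require Import structures.
From mathcomp Require Import all_boot all_order all_algebra.
From mathcomp Require Import all_classical all_reals all_analysis.
Set Implicit Arguments. Unset Strict Implicit. Unset Printing Implicit Defensive.
Import Order.TTheory GRing.Theory Num.Theory.
Local Open Scope classical_set_scope.
Local Open Scope ring_scope.

(* An (M1, M2, ...) successive-refinement code (without the distortion/error
   constraints, which are stated separately).  Randomized encoders are stochastic kernels into finite
   sets, i.e. conditional pmfs measurable in the conditioning source letter;
   decoders are stochastic kernels from finite sets, i.e. one probability
   measure per message. *)
Record sr_code (R : realType) (dX dY1 dY2 : measure_display)
    (X : measurableType dX) (Y1 : measurableType dY1) (Y2 : measurableType dY2)
    (M1 M2 : nat) := SRCode {
  enc1 : X -> 'I_M1 -> R ;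
  enc1_meas : forall w1, measurable_fun setT (fun x => enc1 x w1) ;
  enc1_ge0 : forall x w1, 0 <= enc1 x w1 ;
  enc1_sum1 : forall x, \sum_(w1 < M1) enc1 x w1 = 1 ;
  enc2 : X -> 'I_M1 -> 'I_(M2 %/ M1) -> R ;
  enc2_meas : forall w1 w2, measurable_fun setT (fun x => enc2 x w1 w2) ;
  enc2_ge0 : forall x w1 w2, 0 <= enc2 x w1 w2 ;
  enc2_sum1 : forall x w1, \sum_(w2 < M2 %/ M1) enc2 x w1 w2 = 1 ;
  dec1 : 'I_M1 -> probability Y1 R ;
  dec2 : 'I_M1 -> 'I_(M2 %/ M1) -> probability Y2 R
}.

(* Probability, under the joint law of (X, W1, W2, Y1, Y2) induced by
   X ~ PX and the code, of an event E about (X, Y1, Y2). *)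
Definition code_prob (R : realType) (dX dY1 dY2 : measure_display)
    (X : measurableType dX) (Y1 : measurableType dY1) (Y2 : measurableType dY2)
    (M1 M2 : nat) (PX : probability X R)
    (c : sr_code R X Y1 Y2 M1 M2) (E : set (X * Y1 * Y2)) : \bar R :=
  (\int[PX]_x
     \sum_(w1 < M1) \sum_(w2 < M2 %/ M1)
        ((enc1 c x w1 * enc2 c x w1 w2)%:E *
         \int[dec1 c w1]_y1 \int[dec2 c w1 w2]_y2 (\1_E (x, y1, y2))%:E))%E.

(* Main.v *)
Require Import Defs.
From HB Require Import structures.
From mathcomp Require Import all_boot all_order all_algebra.
From mathcomp Require Import all_classical all_reals all_analysis.
From mathcomp Require Import measurable_realfun ring lra.
Import Order.TTheory GRing.Theory Num.Theory.
Local Open Scope classical_set_scope.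
Local Open Scope ring_scope.

Section helpers.
Local Open Scope ereal_scope.
Context (R : realType) (dX dY1 dY2 : measure_display)
    (X : measurableType dX) (Y1 : measurableType dY1) (Y2 : measurableType dY2)
    (PX : probability X R) (M1 M2 : nat) (c : sr_code R X Y1 Y2 M1 M2).

Lemma int_mono d (T : measurableType d) (mu : {measure set T -> \bar R})
  (f g : T -> \bar R) :
  (forall x, 0 <= f x) -> (forall x, f x <= g x) ->
  \int[mu]_x f x <= \int[mu]_x g x.
Proof.
move=> f0 fg; have g0 x : 0 <= g x by exact: le_trans (f0 x) (fg x).
rewrite !ge0_integralTE //; apply: ereal_sup_le => _ [h hf <-]; exists h => //= x.
exact: le_trans (hf x) (fg x).
Qed.
Arguments int_mono {d T mu f g}.

Lemma int_cst_prob d (T : measurableType d) (P : probability T R) (r : \bar R) :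
  \int[P]_x r = r.
Proof. transitivity (r * 1); last by rewrite mule1. rewrite integral_cst //; congr (_ * _); exact: probability_setT. Qed.

Lemma EFin_natmulR (r : R) n : ((r%:E) *+ n)%R = (r *+ n)%:E.
Proof. by elim: n => // n IH; rewrite !mulrS IH EFinD. Qed.

Definition Ecode (h : X * Y1 * Y2 -> \bar R) :=
  \int[PX]_x \sum_(w1 < M1) \sum_(w2 < M2 %/ M1)
        ((enc1 c x w1 * enc2 c x w1 w2)%:E *
         \int[dec1 c w1]_y1 \int[dec2 c w1 w2]_y2 h (x, y1, y2)).

Lemma code_probE E : code_prob PX c E = Ecode (fun p => (\1_E p)%:E).
Proof. by []. Qed.

Lemma enc_ge0 x w1 w2 : 0 <= (enc1 c x w1 * enc2 c x w1 w2)%:E.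
Proof. by rewrite lee_fin mulr_ge0 // ?enc1_ge0 ?enc2_ge0. Qed.

Lemma inner_ge0 (h : X * Y1 * Y2 -> \bar R) x w1 w2 : (forall p, 0 <= h p) ->
  0 <= \int[dec1 c w1]_y1 \int[dec2 c w1 w2]_y2 h (x, y1, y2).
Proof.
by move=> h0; apply: integral_ge0 => y1 _; apply: integral_ge0 => y2 _.
Qed.

Lemma Ecode_mono (h g : X * Y1 * Y2 -> \bar R) : (forall p, 0 <= h p) -> (forall p, h p <= g p) ->
  Ecode h <= Ecode g.
Proof.
move=> h0 hg; apply: int_mono => x.
  apply: sume_ge0 => w1 _; apply: sume_ge0 => w2 _.
  by apply: mule_ge0; [exact: enc_ge0|exact: inner_ge0].
apply: lee_sum => w1 _; apply: lee_sum => w2 _; apply: lee_wpmul2l; first exact: enc_ge0.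
apply: int_mono => y1; first by apply: integral_ge0 => y2 _.
by apply: int_mono => y2.
Qed.

Lemma meas_in2 (h : X * Y1 * Y2 -> \bar R) w1 w2 : measurable_fun setT h -> (forall p, 0 <= h p) ->
  measurable_fun setT (fun q : X * Y1 => \int[dec2 c w1 w2]_y2 h (q, y2)).
Proof. by move=> mh h0; exact: (measurable_fun_fubini_tonelli_F (m2:=dec2 c w1 w2) h mh h0). Qed.

Lemma meas_in1 (h : X * Y1 * Y2 -> \bar R) w1 w2 : measurable_fun setT h -> (forall p, 0 <= h p) ->
  measurable_fun setT (fun x => \int[dec1 c w1]_y1 \int[dec2 c w1 w2]_y2 h (x, y1, y2)).
Proof.
move=> mh h0.
apply: (measurable_fun_fubini_tonelli_F (m2:=dec1 c w1)
   (fun q => \int[dec2 c w1 w2]_y2 h (q, y2))); first exact: meas_in2.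
by move=> q; apply: integral_ge0.
Qed.

Lemma meas_outer (h : X * Y1 * Y2 -> \bar R) : measurable_fun setT h -> (forall p, 0 <= h p) ->
  measurable_fun setT (fun x => \sum_(w1 < M1) \sum_(w2 < M2 %/ M1)
        ((enc1 c x w1 * enc2 c x w1 w2)%:E *
         \int[dec1 c w1]_y1 \int[dec2 c w1 w2]_y2 h (x, y1, y2))).
Proof.
move=> mh h0; apply: emeasurable_sum => w1; apply: emeasurable_sum => w2.
apply: emeasurable_funM; last exact: meas_in1.
apply/measurable_EFinP; apply: measurable_funM; [exact: enc1_meas|exact: enc2_meas].
Qed.

Lemma Ecode_add (h g : X * Y1 * Y2 -> \bar R) : measurable_fun setT h -> (forall p, 0 <= h p) ->
  measurable_fun setT g -> (forall p, 0 <= g p) ->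
  Ecode (fun p => h p + g p) = Ecode h + Ecode g.
Proof.
move=> mh h0 mg g0; rewrite /Ecode -ge0_integralD //; last 4 first.
- by move=> x _; apply: sume_ge0 => w1 _; apply: sume_ge0 => w2 _; apply: mule_ge0; [exact: enc_ge0|exact: inner_ge0].
- exact: meas_outer.
- by move=> x _; apply: sume_ge0 => w1 _; apply: sume_ge0 => w2 _; apply: mule_ge0; [exact: enc_ge0|exact: inner_ge0].
- exact: meas_outer.
apply: eq_integral => x _; rewrite -big_split /=; apply: eq_bigr => w1 _.
rewrite -big_split; apply: eq_bigr => w2 _ /=.
rewrite -ge0_muleDr ?inner_ge0 //; congr (_ * _).
rewrite -ge0_integralD //; last 4 first.
- by move=> y1 _; apply: integral_ge0.
- exact: (measurable_fun_pair2 (f := fun q : X * Y1 => \int[dec2 c w1 w2]_y2 h (q, y2)) x (meas_in2 _ w1 w2 mh h0)).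
- by move=> y1 _; apply: integral_ge0.
- exact: (measurable_fun_pair2 (f := fun q : X * Y1 => \int[dec2 c w1 w2]_y2 g (q, y2)) x (meas_in2 _ w1 w2 mg g0)).
apply: eq_integral => y1 _; rewrite ge0_integralD //.
- exact: (measurable_fun_pair2 (f := h) (x, y1) mh).
- exact: (measurable_fun_pair2 (f := g) (x, y1) mg).
Qed.

Lemma Ecode_scale (k : R) (h : X * Y1 * Y2 -> \bar R) : (0 <= k)%R -> measurable_fun setT h -> (forall p, 0 <= h p) ->
  Ecode (fun p => k%:E * h p) = k%:E * Ecode h.
Proof.
move=> k0 mh h0; rewrite /Ecode -ge0_integralZl_EFin //; last 2 first.
- by move=> x _; apply: sume_ge0 => w1 _; apply: sume_ge0 => w2 _; apply: mule_ge0; [exact: enc_ge0|exact: inner_ge0].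
- exact: meas_outer.
apply: eq_integral => x _.
rewrite ge0_sume_distrr; last first.
  by move=> w1 _; apply: sume_ge0 => w2 _; apply: mule_ge0; [exact: enc_ge0|exact: inner_ge0].
apply: eq_bigr => w1 _; rewrite ge0_sume_distrr; last first.
  by move=> w2 _; apply: mule_ge0; [exact: enc_ge0|exact: inner_ge0].
apply: eq_bigr => w2 _; rewrite muleCA; congr (_ * _).
rewrite -ge0_integralZl_EFin //; last 2 first.
- by move=> y1 _; apply: integral_ge0.
- exact: (measurable_fun_pair2 (f := fun q : X * Y1 => \int[dec2 c w1 w2]_y2 h (q, y2)) x (meas_in2 _ w1 w2 mh h0)).
apply: eq_integral => y1 _; rewrite ge0_integralZl_EFin //.
exact: (measurable_fun_pair2 (f := h) (x, y1) mh).
Qed.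


Lemma enc1_le1 x w1 : (enc1 c x w1 <= 1)%R.
Proof.
rewrite -(enc1_sum1 c x) (bigD1 w1) //= lerDl; apply: sumr_ge0 => i _; exact: enc1_ge0.
Qed.

Lemma enc2_le1 x w1 w2 : (enc2 c x w1 w2 <= 1)%R.
Proof.
rewrite -(enc2_sum1 c x w1) (bigD1 w2) //= lerDl; apply: sumr_ge0 => i _; exact: enc2_ge0.
Qed.

Lemma sum_enc2 x w1 (G : \bar R) : 0 <= G ->
  \sum_(w2 < M2 %/ M1) ((enc1 c x w1 * enc2 c x w1 w2)%:E * G) = (enc1 c x w1)%:E * G.
Proof.
move=> G0; rewrite -ge0_sume_distrl; last by move=> w2 _; exact: enc_ge0.
by rewrite sumEFin -mulr_sumr enc2_sum1 mulr1.
Qed.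

Lemma bound1 (g : X * Y1 -> \bar R) : measurable_fun setT g -> (forall q, 0 <= g q) ->
  (forall y1, \int[PX]_x g (x, y1) <= 1) ->
  Ecode (fun p => g p.1) <= M1%:R%:E.
Proof.
move=> mg g0 gle; rewrite /Ecode.
have E1 x : \sum_(w1 < M1) \sum_(w2 < M2 %/ M1)
        ((enc1 c x w1 * enc2 c x w1 w2)%:E *
         \int[dec1 c w1]_y1 \int[dec2 c w1 w2]_y2 g (x, y1, y2).1) =
   \sum_(w1 < M1) (enc1 c x w1)%:E * \int[dec1 c w1]_y1 g (x, y1).
  apply: eq_bigr => w1 _; rewrite -sum_enc2; last by apply: integral_ge0.
  apply: eq_bigr => w2 _; congr (_ * _); apply: eq_integral => y1 _.
  exact: (@int_cst_prob _ _ (dec2 c w1 w2) (g (x, y1))).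
under eq_integral => x _ do rewrite E1.
apply: le_trans (int_mono (g := fun x => \sum_(w1 < M1) \int[dec1 c w1]_y1 g (x, y1)) _ _) _.
- move=> x; apply: sume_ge0 => w1 _; apply: mule_ge0; first by rewrite lee_fin enc1_ge0.
  exact: integral_ge0.
- move=> x; apply: lee_sum => w1 _.
  rewrite -[leRHS]mul1e; apply: lee_wpmul2r; first exact: integral_ge0.
  by rewrite lee_fin enc1_le1.
rewrite ge0_integral_sum //; last 2 first.
- by move=> w1; exact: (measurable_fun_fubini_tonelli_F (m2:=dec1 c w1) g mg g0).
- by move=> w1 x _; exact: integral_ge0.
apply: (@le_trans _ _ (\sum_(w1 < M1) (1%:E : \bar R))).
  apply: lee_sum => w1 _.
  rewrite (@fubini_tonelli _ _ _ _ R PX (dec1 c w1) g mg g0).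
  apply: le_trans (int_mono (g := fun _ => 1) _ _) _.
  - by move=> y1; apply: integral_ge0 => x _.
  - exact: gle.
  - by rewrite int_cst_prob.
by rewrite (sumEFin _ _ (fun=> 1%R)) sumr_const card_ord.
Qed.

Lemma bound2 (g : X * Y1 * Y2 -> \bar R) : measurable_fun setT g -> (forall q, 0 <= g q) ->
  (forall y1 y2, \int[PX]_x g (x, y1, y2) <= 1) ->
  Ecode g <= (M1 * (M2 %/ M1))%:R%:E.
Proof.
move=> mg g0 gle; rewrite /Ecode.
apply: le_trans (int_mono (g := fun x => \sum_(w1 < M1) \sum_(w2 < M2 %/ M1)
   \int[dec1 c w1]_y1 \int[dec2 c w1 w2]_y2 g (x, y1, y2)) _ _) _.
- move=> x; apply: sume_ge0 => w1 _; apply: sume_ge0 => w2 _.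
  by apply: mule_ge0; [exact: enc_ge0|exact: inner_ge0].
- move=> x; apply: lee_sum => w1 _; apply: lee_sum => w2 _.
  rewrite -[leRHS]mul1e; apply: lee_wpmul2r; first exact: inner_ge0.
  by rewrite lee_fin mulr_ile1 ?enc1_ge0 ?enc2_ge0 ?enc1_le1 ?enc2_le1.
rewrite ge0_integral_sum //; last 2 first.
- move=> w1; apply: emeasurable_sum => w2; exact: meas_in1.
- by move=> w1 x _; apply: sume_ge0 => w2 _; exact: inner_ge0.
apply: (@le_trans _ _ (\sum_(w1 < M1) \sum_(w2 < M2 %/ M1) (1%:E : \bar R))); last first.
  by rewrite (sumEFin _ _ (fun=> 1%R)) sumr_const card_ord sumr_const card_ord EFin_natmulR -mulrnA mulnC.
apply: lee_sum => w1 _.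
rewrite ge0_integral_sum //; last 2 first.
- by move=> w2; exact: meas_in1.
- by move=> w2 x _; exact: inner_ge0.
apply: lee_sum => w2 _.
rewrite (@fubini_tonelli _ _ _ _ R PX (dec1 c w1)
   (fun q => \int[dec2 c w1 w2]_y2 g (q, y2)) (meas_in2 _ w1 w2 mg g0)); last first.
  by move=> q; exact: integral_ge0.
apply: le_trans (int_mono (g := fun _ => 1) _ _) _; last by rewrite int_cst_prob.
  by move=> y1; apply: integral_ge0 => x _; exact: integral_ge0.
move=> y1.
have mq : measurable_fun setT (fun q : X * Y2 => g (q.1, y1, q.2)).
  apply: measurableT_comp; first exact: mg.
  apply: measurable_fun_pair; last exact: measurable_snd.
  by apply: measurable_fun_pair; [exact: measurable_fst|exact: measurable_cst].
have := (@fubini_tonelli _ _ _ _ R PX (dec2 c w1 w2) _ mq (fun q => g0 _)).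
move=> /= ->.
apply: le_trans (int_mono (g := fun _ => 1) _ _) _; last by rewrite int_cst_prob.
  by move=> y2; apply: integral_ge0.
by move=> y2; exact: gle.
Qed.

End helpers.

Arguments Ecode {R dX dY1 dY2 X Y1 Y2} PX {M1 M2} c h.
Arguments code_probE {R dX dY1 dY2 X Y1 Y2} PX {M1 M2} c E.
Arguments Ecode_mono {R dX dY1 dY2 X Y1 Y2} PX {M1 M2} c {h g}.
Arguments Ecode_add {R dX dY1 dY2 X Y1 Y2} PX {M1 M2} c {h g}.
Arguments Ecode_scale {R dX dY1 dY2 X Y1 Y2} PX {M1 M2} c k {h}.
Arguments bound1 {R dX dY1 dY2 X Y1 Y2} PX {M1 M2} c {g}.
Arguments bound2 {R dX dY1 dY2 X Y1 Y2} PX {M1 M2} c {g}.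

Section reals.
Variable R : realType.

Lemma powR_exp (b a : R) : 0 < b -> b `^ a = expR (a * ln b).
Proof. by move=> b0; rewrite /powR gt_eqF. Qed.

Lemma ge1_expR (z : R) : 0 <= z -> 1 <= expR z.
Proof. by move=> z0; have := expR_ge1Dx z; lra. Qed.

Lemma real1 (nu l1 D1 d1 b1 b2 g : R) (M : nat) : 0 <= nu -> 0 <= l1 ->
  0 < b1 -> 0 < b2 -> (0 < M)%N -> D1 <= d1 ->
  ln M%:R + g <= ln (b2 `^ (1 / (1 + nu)) / b1) - l1 / (1 + nu) * d1 ->
  1 <= expR (- g) / M%:R *
       (expR (- (l1 / (1 + nu)) * D1) * b2 `^ (1 / (1 + nu)) / b1).
Proof.
move=> nu0 l10 b10 b20 M0 hD hB.
have t0 : 0 < 1 + nu by lra.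
have a0 : 0 <= l1 / (1 + nu) by rewrite divr_ge0 // ltW.
set a := l1 / (1 + nu) in a0 hB *; set s := 1 / (1 + nu) in hB *.
have eb1 : b1 = expR (ln b1) by rewrite lnK.
have eM : M%:R = expR (ln M%:R) :> R by rewrite lnK // posrE ltr0n.
rewrite powR_exp // in hB *.
rewrite eb1 in hB; rewrite eb1 eM.
rewrite -expRN -expRD expRK in hB.
set L1 := ln b1 in hB *; set L2 := ln b2 in hB *; set LM := ln M%:R in hB *.
have -> : expR (- g) / expR LM * (expR (- a * D1) * expR (s * L2) / expR L1) =
  expR (- g - LM + (- a * D1) + s * L2 - L1).
  rewrite !expRD !expRN; ring.
apply: ge1_expR.
have := ler_wpM2l a0 hD; lra.
Qed.

Lemma real2 (nu l1 l2 D1 D2 d1 d2 b1 b2 g1 g2 : R) (M1 M2 : nat) :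
  0 <= nu -> 0 <= l1 -> 0 <= l2 ->
  0 < b1 -> 0 < b2 -> (0 < M1)%N -> (0 < M2)%N -> D1 <= d1 -> D2 <= d2 ->
  ~ (ln M1%:R + g1 <= ln (b2 `^ (1 / (1 + nu)) / b1) - l1 / (1 + nu) * d1) ->
  ln M2%:R + nu * g1 + g2 <=
    (1 + nu) * ln (1 / b1) - l1 * d1 - l2 * d2 - nu * ln M1%:R ->
  1 <= expR (- g2) / M2%:R *
    (expR (- (l1 / (1 + nu)) * D1 - l2 * D2) / (b1 * b2 `^ (nu / (1 + nu)))).
Proof.
move=> nu0 l10 l20 b10 b20 M10 M20 hD1 hD2 hB hC.
move/negP: hB; rewrite -ltNge => hB.
have t0 : 0 < 1 + nu by lra.
have a0 : 0 <= l1 / (1 + nu) by rewrite divr_ge0 // ltW.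
have ea : l1 = l1 / (1 + nu) + nu * (l1 / (1 + nu)).
  by field; rewrite gt_eqF.
have er : nu / (1 + nu) = nu * (1 / (1 + nu)) by rewrite mul1r.
rewrite er; rewrite ea in hC.
set a := l1 / (1 + nu) in a0 hB hC *; set s := 1 / (1 + nu) in hB *.
have eb1 : b1 = expR (ln b1) by rewrite lnK.
have eM : M2%:R = expR (ln M2%:R) :> R by rewrite lnK // posrE ltr0n.
rewrite !powR_exp // in hB *.
rewrite eb1 in hB hC; rewrite eb1 eM.
rewrite -expRN -expRD expRK in hB.
rewrite -expRN mul1r expRK in hC.
set L1 := ln b1 in hB hC *; set L2 := ln b2 in hB *; set LM := ln M2%:R in hC *.
set LM1 := ln M1%:R in hB hC.
have -> : expR (- g2) / expR LM * (expR (- a * D1 - l2 * D2) / (expR L1 * expR (nu * s * L2))) =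
  expR (- g2 - LM + (- a * D1 - l2 * D2) - (L1 + nu * s * L2)).
  rewrite !(expRD, expRN) !invfM; ring.
apply: ge1_expR.
have h1 := ler_wpM2l nu0 (ltW hB).
have h2 := ler_wpM2l a0 hD1.
have h3 := ler_wpM2l l20 hD2.
nra.
Qed.

End reals.


Theorem corollary2 (R : realType) (dX dY1 dY2 : measure_display)
    (X : measurableType dX) (Y1 : measurableType dY1) (Y2 : measurableType dY2)
    (PX : probability X R)
    (dist1 : X * Y1 -> R) (dist2 : X * Y2 -> R)
    (nu1 lambda1 lambda2 : R) (beta1 : X -> R) (beta2 : X * Y1 -> R)
    (M1 M2 : nat) (c : sr_code R X Y1 Y2 M1 M2)
    (d1 d2 eps1 eps2 : R) :
  (forall x : X, measurable [set x]) ->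
  (forall y : Y1, measurable [set y]) ->
  (forall y : Y2, measurable [set y]) ->
  (forall p, 0 <= dist1 p) -> measurable_fun setT dist1 ->
  (forall p, 0 <= dist2 p) -> measurable_fun setT dist2 ->
  0 <= nu1 -> 0 <= lambda1 -> 0 <= lambda2 ->
  measurable_fun setT beta1 -> (forall x, 0 < beta1 x) ->
  measurable_fun setT beta2 -> (forall p, 0 < beta2 p) ->
  (* Sigma_2(y1, y2) <= 1 *)
  (forall (y1 : Y1) (y2 : Y2),
     (\int[PX]_x
        (expR (- (lambda1 / (1 + nu1)) * dist1 (x, y1) - lambda2 * dist2 (x, y2))
         / (beta1 x * beta2 (x, y1) `^ (nu1 / (1 + nu1))))%:E <= 1)%E) ->
  (* Sigma_1(y1) <= 1 *)
  (forall y1 : Y1,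
     (\int[PX]_x
        (expR (- (lambda1 / (1 + nu1)) * dist1 (x, y1))
         * beta2 (x, y1) `^ (1 / (1 + nu1)) / beta1 x)%:E <= 1)%E) ->
  (* the (M1, M2, d1, d2, eps1, eps2) code *)
  (0 < M1)%N -> (M1 <= M2)%N ->
  (code_prob PX c [set p | (d1 < dist1 (p.1.1, p.1.2))%R] <= eps1%:E)%E ->
  (code_prob PX c [set p | (d1 < dist1 (p.1.1, p.1.2))%R \/ (d2 < dist2 (p.1.1, p.2))%R]
     <= eps2%:E)%E ->
  let F1 := fun p : X * Y1 * Y2 =>
    ln (beta2 (p.1.1, p.1.2) `^ (1 / (1 + nu1)) / beta1 p.1.1)
    - lambda1 / (1 + nu1) * d1 in
  let F := fun p : X * Y1 * Y2 =>
    (1 + nu1) * ln (1 / beta1 p.1.1) - lambda1 * d1 - lambda2 * d2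
    - nu1 * ln M1%:R in
  forall gamma1 gamma2 : R, 0 < gamma1 -> 0 < gamma2 ->
    (eps1%:E >= code_prob PX c [set p | (ln M1%:R + gamma1 <= F1 p)%R]
                - (expR (- gamma1))%:E)%E /\
    (eps2%:E >= code_prob PX c
        ([set p | (ln M2%:R + nu1 * gamma1 + gamma2 <= F p)%R]
         `|` [set p | (ln M1%:R + gamma1 <= F1 p)%R])
        - (expR (- gamma1))%:E - (expR (- gamma2))%:E)%E.
Proof.
move=> mX mY1 mY2 dist10 md1 dist20 md2 nu0 l10 l20 mb1 b1pos mb2 b2pos S2 S1
  M1pos M1M2 hA1 hA2 F1 F gamma1 gamma2 g1pos g2pos.
have t0 : (0 < 1 + nu1)%R by lra.
have M2pos : (0 < M2)%N by apply: leq_trans M1M2.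
pose g1r (q : X * Y1) : R := (expR (- (lambda1 / (1 + nu1)) * dist1 q)
   * beta2 q `^ (1 / (1 + nu1)) / beta1 q.1)%R.
pose g2r (p : X * Y1 * Y2) : R :=
  (expR (- (lambda1 / (1 + nu1)) * dist1 (p.1.1, p.1.2) - lambda2 * dist2 (p.1.1, p.2))
         / (beta1 p.1.1 * beta2 (p.1.1, p.1.2) `^ (nu1 / (1 + nu1))))%R.
have g1r0 q : (0 <= g1r q)%R.
  by rewrite /g1r divr_ge0 ?mulr_ge0 ?expR_ge0 ?powR_ge0 // ltW.
have g2r0 p : (0 <= g2r p)%R.
  by rewrite /g2r divr_ge0 ?mulr_ge0 ?expR_ge0 ?powR_ge0 // ltW.
have minv d' (T : measurableType d') (f : T -> R) : (forall x, 0 < f x)%R ->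
    measurable_fun setT f -> measurable_fun setT (fun x => (f x)^-1)%R.
  move=> f0 mf.
  have -> : (fun x => (f x)^-1)%R = (fun x => expR (- ln (f x)))%R.
    by apply/funext => x; rewrite expRN lnK // posrE.
  apply: measurableT_comp; first exact: measurable_expR.
  apply: (measurable_funN (f := fun x => ln (f x))).
  by apply: measurableT_comp; [exact: measurable_ln|].
have mdist1 : measurable_fun setT (fun p : X * Y1 * Y2 => dist1 (p.1.1, p.1.2)).
  apply: measurableT_comp; first exact: md1.
  by apply: measurable_fun_pair; apply: measurableT_comp; try exact: measurable_fst;
     exact: measurable_snd.
have mdist2 : measurable_fun setT (fun p : X * Y1 * Y2 => dist2 (p.1.1, p.2)).
  apply: measurableT_comp; first exact: md2.
  apply: measurable_fun_pair; last exact: measurable_snd.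
  by apply: measurableT_comp; exact: measurable_fst.
have mg1 : measurable_fun setT (EFin \o g1r).
  apply/(@measurable_EFinP _ (X * Y1)%type R setT g1r).
  apply: (@measurable_funM _ _ _ _ (fun q => expR (- (lambda1 / (1 + nu1)) * dist1 q)
      * beta2 q `^ (1 / (1 + nu1)))%R (fun q : X * Y1 => (beta1 q.1)^-1)%R).
    apply: (@measurable_funM _ _ _ _ (fun q => expR (- (lambda1 / (1 + nu1)) * dist1 q))%R
      (fun q => beta2 q `^ (1 / (1 + nu1)))%R).
      apply: measurableT_comp; first exact: measurable_expR.
      apply: (@measurable_funM _ _ _ _ (cst (- (lambda1 / (1 + nu1)))%R) dist1) => //.
    exact: (measurableT_comp (measurable_powR _) mb2).
  apply: (minv _ _ (fun q : X * Y1 => beta1 q.1)); first by move=> q; exact: b1pos.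
  by apply: measurableT_comp; [exact: mb1|exact: measurable_fst].
have mg2 : measurable_fun setT (EFin \o g2r).
  apply/(@measurable_EFinP _ (X * Y1 * Y2)%type R setT g2r).
  apply: (@measurable_funM _ _ _ _
      (fun p : X * Y1 * Y2 => expR (- (lambda1 / (1 + nu1)) * dist1 (p.1.1, p.1.2)
          - lambda2 * dist2 (p.1.1, p.2)))%R
      (fun p : X * Y1 * Y2 => (beta1 p.1.1 * beta2 (p.1.1, p.1.2) `^ (nu1 / (1 + nu1)))^-1)%R).
    apply: measurableT_comp; first exact: measurable_expR.
    apply: (@measurable_funB _ _ _ _
       (fun p : X * Y1 * Y2 => - (lambda1 / (1 + nu1)) * dist1 (p.1.1, p.1.2))%R
       (fun p : X * Y1 * Y2 => lambda2 * dist2 (p.1.1, p.2))%R).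
      exact: (@measurable_funM _ _ _ _ (cst (- (lambda1 / (1 + nu1)))%R) _).
    exact: (@measurable_funM _ _ _ _ (cst lambda2) _).
  apply: (minv _ _ (fun p : X * Y1 * Y2 => beta1 p.1.1 * beta2 (p.1.1, p.1.2) `^ (nu1 / (1 + nu1)))%R).
    by move=> p; rewrite mulr_gt0 ?powR_gt0.
  apply: (@measurable_funM _ _ _ _ (fun p : X * Y1 * Y2 => beta1 p.1.1)
     (fun p : X * Y1 * Y2 => beta2 (p.1.1, p.1.2) `^ (nu1 / (1 + nu1)))%R).
    by apply: measurableT_comp; [exact: mb1|]; apply: measurableT_comp; exact: measurable_fst.
  apply: (measurableT_comp (measurable_powR _) (g := fun p : X * Y1 * Y2 => beta2 (p.1.1, p.1.2))).
  apply: measurableT_comp; first exact: mb2.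
  by apply: measurable_fun_pair; apply: measurableT_comp; try exact: measurable_fst;
     exact: measurable_snd.
have meas_lt (f : X * Y1 * Y2 -> R) (a : R) : measurable_fun setT f ->
    measurable [set p | (a < f p)%R].
  move=> mf; rewrite -preimage_itvoy -[Z in measurable Z]setTI.
  exact: mf measurableT _ (measurable_itv _).
pose A1c := [set p : X * Y1 * Y2 | (d1 < dist1 (p.1.1, p.1.2))%R].
pose A2c := [set p : X * Y1 * Y2 | (d1 < dist1 (p.1.1, p.1.2))%R \/ (d2 < dist2 (p.1.1, p.2))%R].
have mA1 : measurable A1c by exact: meas_lt.
have mA2 : measurable A2c by exact: measurableU (meas_lt _ _ mdist1) (meas_lt _ _ mdist2).
have mI (A : set (X * Y1 * Y2)) : measurable A -> measurable_fun setT (EFin \o \1_A).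
  by move=> mA; apply/measurable_EFinP; exact: measurable_indic.
have ind0 (A : set (X * Y1 * Y2)) p : (0 <= (\1_A p : R)%:E)%E by rewrite lee_fin indicE ler0n.
have indle1 (A : set (X * Y1 * Y2)) p : (\1_A p <= 1 :> R)%R.
  by rewrite indicE; case: (_ \in _).
have ind1 (A : set (X * Y1 * Y2)) p : A p -> \1_A p = 1%R :> R.
  by move=> Ap; rewrite indicE mem_set.
have ind0' (A : set (X * Y1 * Y2)) p : ~ A p -> \1_A p = 0%R :> R.
  by move=> Ap; rewrite indicE memNset.
pose k1 := (expR (- gamma1) / M1%:R)%R.
pose k2 := (expR (- gamma2) / M2%:R)%R.
have k10 : (0 <= k1)%R by rewrite /k1 divr_ge0 ?expR_ge0.
have k20 : (0 <= k2)%R by rewrite /k2 divr_ge0 ?expR_ge0.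
have mg1' : measurable_fun setT (fun p : X * Y1 * Y2 => (g1r p.1)%:E).
  exact: measurableT_comp mg1 measurable_fst.
have B1 : (Ecode PX c (fun p => (g1r p.1)%:E) <= M1%:R%:E)%E.
  apply: (bound1 PX c (g := EFin \o g1r) mg1 _ S1).
  by move=> q; rewrite lee_fin.
have B2 : (Ecode PX c (fun p => (g2r p)%:E) <= M2%:R%:E)%E.
  apply: le_trans (bound2 PX c (g := EFin \o g2r) mg2 _ S2) _.
    by move=> q; rewrite lee_fin.
  by rewrite lee_fin ler_nat mulnC leq_divM.
have ek1 : (k1%:E * M1%:R%:E = (expR (- gamma1))%:E)%E.
  by rewrite -EFinM /k1 divfK // pnatr_eq0 -lt0n.
have ek2 : (k2%:E * M2%:R%:E = (expR (- gamma2))%:E)%E.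
  by rewrite -EFinM /k2 divfK // pnatr_eq0 -lt0n.
split.
  rewrite leeBlDr // code_probE.
  have pt1 p : ((\1_[set p | (ln M1%:R + gamma1 <= F1 p)%R] p)%:E <=
      (\1_A1c p)%:E + k1%:E * (g1r p.1)%:E)%E.
    move: p => [[x y1] y2]; rewrite -EFinM -EFinD lee_fin.
    have := mulr_ge0 k10 (g1r0 (x, y1)).
    have [hd|hd] := ltP d1 (dist1 (x, y1)).
      rewrite (ind1 A1c) //; have := indle1 [set p | (ln M1%:R + gamma1 <= F1 p)%R] (x, y1, y2).
      lra.
    rewrite (ind0' A1c) /=; last by rewrite /A1c /=; apply/negP; rewrite -leNgt.
    have [hB|hB] := pselect (ln M1%:R + gamma1 <= F1 (x, y1, y2))%R.
      rewrite (ind1 _ _ hB) add0r => _.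
      move: hB; rewrite /k1 /g1r /F1 /= => hB.
      exact: (@real1 R nu1 lambda1 (dist1 (x, y1)) d1 (beta1 x) (beta2 (x, y1)) gamma1 M1 nu0 l10 (b1pos x) (b2pos (x, y1)) M1pos hd hB).
    by rewrite (ind0' _ _ hB) add0r.
  apply: le_trans (Ecode_mono PX c (ind0 _) pt1) _.
  rewrite (Ecode_add PX c); [|exact: mI|exact: ind0|exact: measurable_funeM|].
    2: by move=> p; rewrite mule_ge0 // lee_fin.
  rewrite (Ecode_scale PX c k1) //; last by move=> p; rewrite lee_fin.
  apply: leeD; first exact: hA1.
  by rewrite -ek1; apply: lee_wpmul2l; rewrite ?lee_fin.
rewrite leeBlDr // leeBlDr // code_probE.
have pt2 p : ((\1_([set p | (ln M2%:R + nu1 * gamma1 + gamma2 <= F p)%R]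
         `|` [set p | (ln M1%:R + gamma1 <= F1 p)%R]) p)%:E <=
    (\1_A2c p)%:E + (k1%:E * (g1r p.1)%:E + k2%:E * (g2r p)%:E))%E.
  move: p => [[x y1] y2]; rewrite -!EFinM -!EFinD lee_fin /=.
  have := mulr_ge0 k10 (g1r0 (x, y1)); have := mulr_ge0 k20 (g2r0 (x, y1, y2)).
  have [hd|hd] := pselect (A2c (x, y1, y2)).
    rewrite (ind1 A2c) //.
    have := indle1 ([set p | (ln M2%:R + nu1 * gamma1 + gamma2 <= F p)%R]
         `|` [set p | (ln M1%:R + gamma1 <= F1 p)%R]) (x, y1, y2).
    lra.
  rewrite (ind0' A2c) //.
  have hd1 : (dist1 (x, y1) <= d1)%R by rewrite leNgt; apply/negP => h; apply: hd; left.
  have hd2 : (dist2 (x, y2) <= d2)%R by rewrite leNgt; apply/negP => h; apply: hd; right.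
  have [hB|hB] := pselect (ln M1%:R + gamma1 <= F1 (x, y1, y2))%R.
    rewrite ind1; last by right.
    have h1 : (1 <= k1 * g1r (x, y1))%R :=
      (@real1 R nu1 lambda1 (dist1 (x, y1)) d1 (beta1 x) (beta2 (x, y1)) gamma1 M1
         nu0 l10 (b1pos x) (b2pos (x, y1)) M1pos hd1 hB).
    lra.
  have [hC|hC] := pselect (ln M2%:R + nu1 * gamma1 + gamma2 <= F (x, y1, y2))%R.
    rewrite ind1; last by left.
    have h2 : (1 <= k2 * g2r (x, y1, y2))%R :=
      (@real2 R nu1 lambda1 lambda2 (dist1 (x, y1)) (dist2 (x, y2)) d1 d2
         (beta1 x) (beta2 (x, y1)) gamma1 gamma2 M1 M2
         nu0 l10 l20 (b1pos x) (b2pos (x, y1)) M1pos M2pos hd1 hd2 hB hC).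
    lra.
  rewrite ind0'; last by case.
  lra.
apply: le_trans (Ecode_mono PX c (ind0 _) pt2) _.
have mk1 : measurable_fun setT (fun p : X * Y1 * Y2 => (k1%:E * (g1r p.1)%:E)%E).
  exact: measurable_funeM.
have mk2 : measurable_fun setT (fun p : X * Y1 * Y2 => (k2%:E * (g2r p)%:E)%E).
  exact: measurable_funeM.
have nk1 p : (0 <= k1%:E * (g1r p.1)%:E)%E by rewrite mule_ge0 // lee_fin.
have nk2 p : (0 <= k2%:E * (g2r p)%:E)%E by rewrite mule_ge0 // lee_fin.
rewrite (Ecode_add PX c); [|exact: mI|exact: ind0|exact: emeasurable_funD|
  by move=> p; exact: adde_ge0].
rewrite (Ecode_add PX c) //.
rewrite (Ecode_scale PX c k1) //; try by move=> p; rewrite lee_fin.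
rewrite (Ecode_scale PX c k2) //; try by move=> p; rewrite lee_fin.
apply: le_trans (leeD hA2 (leeD (_ : k1%:E * _ <= (expR (- gamma1))%:E)
                              (_ : k2%:E * _ <= (expR (- gamma2))%:E)))%E _.
- by rewrite -ek1; apply: lee_wpmul2l; rewrite ?lee_fin.
- by rewrite -ek2; apply: lee_wpmul2l; rewrite ?lee_fin.
by rewrite -!EFinD lee_fin; lra.
Qed.
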